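(* Let $n\ge1$. For every homogeneous polynomial $w\in\mathbb{Z}\langle\mathbf{a},\mathbf{b}\rangle$ of degree $n-1$, $$\Theta(w)=(1-q)^n\cdot[n]!\cdot \mathrm{ps}^*(\gamma(w)).$$ Consequently, for every graded poset $P$ of rank $n$, $$\Theta(\Psi(P))=(1-q)^n\cdot[n]!\cdot\mathrm{ps}^*(F(P)).$$
   Context: $\mathbf{a},\mathbf{b}$ are non-commuting variables. The Major MacMahon map $\Theta:\mathbb{Z}\langle\mathbf{a},\mathbf{b}\rangle\to\mathbb{Z}[q]$ is linear with $\Theta(u_1\cdots u_m)=\prod_{i:\,u_i=\mathbf{b}}q^i$ on monomials. $[m]=1+q+\cdots+q^{m-1}$, $[m]!=[m]\cdots[1]$. $\mathrm{QSym}$ is the algebra of quasi-symmetric functions in variables $t_1,t_2,\dots$, with monomial basis $M_\alpha=\sum_{i_1<\cdots<i_k}t_{i_1}^{\alpha_1}\cdots t_{i_k}^{\alpha_k}$ for compositions $\alpha=(\alpha_1,\dots,\alpha_k)$. For a composition $\alpha$ of $n$, let $v_\alpha=(\mathbf{a}-\mathbf{b})^{\alpha_1-1}\mathbf{b}(\mathbf{a}-\mathbf{b})^{\alpha_2-1}\mathbf{b}\cdots\mathbf{b}(\mathbf{a}-\mathbf{b})^{\alpha_k-1}$ (degree $n-1$); $\gamma:\mathbb{Z}\langle\mathbf{a},\mathbf{b}\rangle\to\mathrm{QSym}$ is the linear map with $\gamma(v_\alpha)=M_\alpha$. The stable principal specialization is $\mathrm{ps}(f)=f(1,q,q^2,\dots)\in\mathbb{Z}[[q]]$.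 The reversal $\alpha^*=(\alpha_k,\dots,\alpha_1)$ induces the linear map $f\mapsto f^*$ on $\mathrm{QSym}$ with $M_\alpha^*=M_{\alpha^*}$, and $\mathrm{ps}^*(f)=\mathrm{ps}(f^* )$. For a graded poset $P$ of rank $m+1$ with minimum $\hat0$, maximum $\hat1$, rank function $\rho$, the $\mathbf{a}\mathbf{b}$-index is $\Psi(P)=\sum_{S\subseteq\{1,\dots,m\}} f_S\, v_S$, where for $S=\{s_1<\cdots<s_k\}$, $f_S$ counts chains $\hat0<x_1<\cdots<x_k<\hat1$ with $\rho(x_i)=s_i$ and $v_S=v_1\cdots v_m$ with $v_i=\mathbf{b}$ if $i\in S$, $v_i=\mathbf{a}-\mathbf{b}$ otherwise. The quasi-symmetric function of $P$ is $F(P)=\gamma(\Psi(P))$; equivalently $F(P)=\lim_{k\to\infty}\sum_{\hat0=x_0\le x_1\le\cdots\le x_k=\hat1}t_1^{\rho(x_1)-\rho(x_0)}\cdots t_k^{\rho(x_k)-\rho(x_{k-1})}$. *)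

(* Defs.v *)
From HB Require Import structures.
From mathcomp Require Import all_boot all_order all_algebra.
Set Implicit Arguments. Unset Strict Implicit. Unset Printing Implicit Defensive.
Import Order.TTheory GRing.Theory Num.Theory.
Local Open Scope ring_scope.

(* Non-commutative series/polynomials in a, b over Z, as coefficient      *)
(* functions on words (seq bool); letter false = a, letter true = b.      *)
Definition ncs := seq bool -> int.

Definition ncadd (f g : ncs) : ncs := fun u => f u + g u.
Definition ncsub (f g : ncs) : ncs := fun u => f u - g u.
Definition ncmul (f g : ncs) : ncs :=
  fun u => \sum_(i < (size u).+1) f (take i u) * g (drop i u).
Definition ncone : ncs := fun u => (u == [::])%:R.
Definition nca : ncs := fun u => (u == [:: false])%:R.
Definition ncb : ncs := fun u => (u == [:: true])%:R.
Definition ncamb : ncs := ncsub nca ncb.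
Definition ncpow (f : ncs) (k : nat) : ncs := iter k (ncmul f) ncone.

(* homogeneous of degree d (hence a polynomial: finitely many words) *)
Definition homog (d : nat) (f : ncs) : Prop := forall u, f u != 0 -> size u = d.

Definition is_comp (n : nat) (al : seq nat) : bool :=
  all (fun x => 0 < x)%N al && (sumn al == n).

Fixpoint vcomp (al : seq nat) : ncs :=
  match al with
  | [::] => ncone
  | [:: x] => ncpow ncamb x.-1
  | x :: rest => ncmul (ncpow ncamb x.-1) (ncmul ncb (vcomp rest))
  end.

(* Major MacMahon map on homogeneous elements of degree d:
   word u_1..u_d |-> q^(sum of positions i (1-based) with u_i = b) *)
Definition Theta (d : nat) (w : ncs) : {poly int} :=
  \sum_(u : d.-tuple bool) w u *: 'X^(\sum_(i < d | tnth u i) i.+1).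

(* Quasi-symmetric functions, represented by their coordinates in the     *)
(* monomial basis M_alpha (alpha a composition, i.e. a seq nat).          *)
Definition qsym := seq nat -> int.
Definition Mbasis (al : seq nat) : qsym := fun be => (be == al)%:R.

(* coefficient of q^m in ps(M_be) = M_be(1,q,q^2,...):
   number of 0 <= e_1 < ... < e_k with sum_j be_j * e_j = m *)
Definition pscoef (be : seq nat) (m : nat) : nat :=
  #|[set t : (size be).-tuple 'I_m.+1 |
      sorted ltn (map val t) &&
      ((\sum_(j < size be) nth 0%N be j * val (tnth t j))%N == m)]|.

(* formal power series in q over Z: coefficient functions nat -> int *)
(* ps^*(f) for f homogeneous of degree n (supported on compositions of n):
   ps^*(f) = sum_alpha f_alpha ps(M_{alpha^*}) *)
Definition psstar (n : nat) (f : qsym) : nat -> int :=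
  fun m => \sum_(k < n.+1) \sum_(t : k.-tuple 'I_n.+1 | is_comp n (map val t))
             f (map val t) * (pscoef (rev (map val t)) m)%:R.

Definition pmul (p : {poly int}) (s : nat -> int) : nat -> int :=
  fun m => \sum_(i < m.+1) p`_i * s (m - i)%N.

Definition qfact (n : nat) : {poly int} := \prod_(i < n) \sum_(j < i.+1) 'X^j.

Definition graded_rank (disp : Order.disp_t) (T : finPOrderType disp)
  (z o : T) (rho : T -> nat) (n : nat) : Prop :=
  [/\ forall x : T, (z <= x)%O && (x <= o)%O,
      rho z = 0%N, rho o = n &
      forall x y : T, (x < y)%O -> (forall t : T, ~~ ((x < t)%O && (t < y)%O)) ->
        rho y = (rho x).+1].

(* f_S for S subset of {1..m}, encoded as S : {set 'I_m} (i <-> i+1) *)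
Definition flagf (disp : Order.disp_t) (T : finPOrderType disp)
  (z o : T) (rho : T -> nat) (m : nat) (S : {set 'I_m}) : nat :=
  #|[set t : #|S|.-tuple T |
      path (fun x y => (x < y)%O) z t && (last z t < o)%O &&
      (map rho t == [seq (val i).+1 | i <- enum S])]|.

Definition vset (m : nat) (S : {set 'I_m}) : ncs :=
  foldr (fun i acc => ncmul (if i \in S then ncb else ncamb) acc) ncone (enum 'I_m).

(* ab-index of a poset of rank m+1 *)
Definition abindex (disp : Order.disp_t) (T : finPOrderType disp)
  (z o : T) (rho : T -> nat) (m : nat) : ncs :=
  fun u => \sum_(S : {set 'I_m}) (flagf z o rho S)%:R * vset S u.

(* Main.v *)
Require Import Defs.
From HB Require Import structures.
From mathcomp Require Import all_boot all_order all_algebra.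
From mathcomp Require Import zify ring.
From Stdlib Require Import FunctionalExtensionality.
Set Implicit Arguments. Unset Strict Implicit. Unset Printing Implicit Defensive.
Import Order.TTheory GRing.Theory Num.Theory.
Local Open Scope ring_scope.

Lemma sum_tuple_cons (T : finType) (R : nmodType) k (G : k.+1.-tuple T -> R) :
  \sum_(t : k.+1.-tuple T) G t = \sum_(x : T) \sum_(t : k.-tuple T) G [tuple of x :: t].
Proof.
rewrite pair_big /=.
rewrite (reindex (fun p : T * k.-tuple T => [tuple of p.1 :: p.2])) //=.
exists (fun t : k.+1.-tuple T => (thead t, [tuple of behead t])).
  move=> [x t] _ /=; congr (_, _); by apply: val_inj.
move=> t _; by rewrite -tuple_eta.
Qed.

Lemma sum_tuple_prod (T : finType) (R : comNzRingType) d (F : 'I_d -> T -> R) :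
  \sum_(t : d.-tuple T) \prod_(i < d) F i (tnth t i) = \prod_(i < d) \sum_(x : T) F i x.
Proof.
elim: d F => [|d IH] F.
  rewrite big_ord0 (big_pred1 [tuple]) ?big_ord0 // => t.
  by apply/esym/eqP; rewrite [t]tuple0.
rewrite sum_tuple_cons big_ord_recl mulr_suml; apply: eq_bigr => x _.
rewrite -(IH (fun i => F (lift ord0 i))) mulr_sumr; apply: eq_bigr => t _.
by rewrite big_ord_recl tnth0; congr (_ * _); apply: eq_bigr => i _; rewrite tnthS.
Qed.

Definition lb : bool -> int := fun x => if x then 1 else 0.
Definition lamb : bool -> int := fun x => if x then -1 else 1.
Definition lett (x : bool) : bool -> int := if x then lb else lamb.

Fixpoint pw (L : seq (bool -> int)) (u : seq bool) : int :=
  match L, u with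
  | [::], [::] => 1
  | l :: L', x :: u' => l x * pw L' u'
  | _, _ => 0
  end.

Lemma pw_size L u : size u != size L -> pw L u = 0.
Proof. by elim: L u => [|l L IH] [|x u] //= H; rewrite IH ?mulr0. Qed.

Lemma pw_cat L1 L2 u :
  pw (L1 ++ L2) u = pw L1 (take (size L1) u) * pw L2 (drop (size L1) u).
Proof.
elim: L1 u => [|l L1 IH] u; first by rewrite take0 drop0 /= mul1r.
by case: u => [|x u] /=; rewrite ?mul0r // IH mulrA.
Qed.

Lemma ncmul_pw L1 L2 u : ncmul (pw L1) (pw L2) u = pw (L1 ++ L2) u.
Proof.
rewrite /ncmul; case: (leqP (size L1) (size u)) => H.
  have H' : (size L1 < (size u).+1)%N by [].
  rewrite (bigD1 (Ordinal H')) //= big1 ?addr0; first by rewrite pw_cat.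
  move=> i Hi; rewrite pw_size ?mul0r // size_take.
  have Hi' : nat_of_ord i != size L1 by apply: contra Hi => /eqP Hi; apply/eqP/val_inj.
  by case: ifP => Hc; have := ltn_ord i; lia.
rewrite big1 ?pw_size ?size_cat //; first by lia.
move=> i _; rewrite pw_size ?mul0r // size_take; case: ifP; lia.
Qed.

Lemma ncmul_ext f f' g g' : f =1 f' -> g =1 g' -> ncmul f g =1 ncmul f' g'.
Proof. by move=> Hf Hg u; apply: eq_bigr => i _; rewrite Hf Hg. Qed.

Lemma ncone_pw : ncone =1 pw [::].
Proof. by case. Qed.

Lemma ncb_pw : ncb =1 pw [:: lb].
Proof. by case=> [|[] [|y u]] //=. Qed.

Lemma ncamb_pw : ncamb =1 pw [:: lamb].
Proof. by case=> [|[] [|y u]] //=. Qed.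

Lemma ncpow_pw k : ncpow ncamb k =1 pw (nseq k lamb).
Proof.
elim: k => [|k IH] u /=; first exact: ncone_pw.
by rewrite (ncmul_ext ncamb_pw IH) ncmul_pw.
Qed.

Fixpoint vword (al : seq nat) : seq (bool -> int) :=
  match al with
  | [::] => [::]
  | [:: x] => nseq x.-1 lamb
  | x :: rest => nseq x.-1 lamb ++ lb :: vword rest
  end.

Lemma vcomp_pw al : vcomp al =1 pw (vword al).
Proof.
elim: al => [|x [|y r] IH] u; first exact: ncone_pw.
  exact: ncpow_pw.
rewrite /=; rewrite (ncmul_ext (ncpow_pw _) (ncmul_ext ncb_pw IH)).
by rewrite (ncmul_ext (frefl _) (ncmul_pw [:: lb] (vword (y :: r)))) ncmul_pw.
Qed.

Definition incr_head (al : seq nat) : seq nat :=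
  if al is x :: r then x.+1 :: r else [:: 1%N].

Fixpoint comp_of (s : seq bool) : seq nat :=
  match s with
  | [::] => [:: 1%N]
  | b :: s' => if b then 1%N :: comp_of s' else incr_head (comp_of s')
  end.

Lemma comp_ofE s : exists x r, comp_of s = x.+1 :: r.
Proof.
elim: s => [|b s [x [r IH]]] /=; first by exists 0%N, [::].
by case: b; rewrite IH; [exists 0%N, (x.+1 :: r) | exists x.+1, r].
Qed.

Lemma vword_comp s : vword (comp_of s) = map lett s.
Proof.
elim: s => [|b s IH] //=; have [x [r E]] := comp_ofE s; move: IH; rewrite E.
case: b => /= <-; first by [].
by case: r {E}.
Qed.

Lemma comp_of_pos s : all (fun x => 0 < x)%N (comp_of s).
Proof.
elim: s => [|b s IH] //=; have [x [r E]] := comp_ofE s; move: IH; rewrite E.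
by case: b.
Qed.

Lemma comp_of_sum s : sumn (comp_of s) = (size s).+1.
Proof.
elim: s => [|b s IH] //=; have [x [r E]] := comp_ofE s; move: IH; rewrite E.
by case: b => /= IH; lia.
Qed.

Lemma is_comp_of s : is_comp (size s).+1 (comp_of s).
Proof. by rewrite /is_comp comp_of_pos comp_of_sum eqxx. Qed.

Fixpoint psums (al : seq nat) : seq nat :=
  if al is x :: r then x :: map (addn x) (psums r) else [::].
Fixpoint tails (be : seq nat) : seq nat :=
  if be is x :: r then sumn be :: tails r else [::].

Lemma tails_rcons r x : tails (rcons r x) = rcons (map (addn x) (tails r)) x.
Proof.
elim: r => [|y r IH] /=; first by rewrite addn0.
by rewrite IH sumn_rcons; congr (_ :: _); lia.
Qed.

Lemma tails_rev al : tails (rev al) = rev (psums al).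
Proof.
elim: al => [|x al IH] //=.
by rewrite rev_cons tails_rcons IH rev_cons map_rev.
Qed.

Definition pos (s : seq bool) : seq nat :=
  [seq i.+1 | i <- iota 0 (size s) & nth false s i].

Lemma pos_cons b s :
  pos (b :: s) = if b then 1%N :: map succn (pos s) else map succn (pos s).
Proof.
rewrite /pos /= -add1n iotaDl filter_map.
have E : [seq x <- iota 0 (size s) | preim (addn 1) (nth false (b :: s)) x] =
         [seq x <- iota 0 (size s) | nth false s x] by [].
by rewrite E {E}; case: b; rewrite /= -map_comp.
Qed.

Lemma psums_comp s : psums (comp_of s) = rcons (pos s) (size s).+1.
Proof.
elim: s => [|b s IH] //=; rewrite pos_cons.
have [x [r E]] := comp_ofE s; move: IH; rewrite E => /= IH.
case: b => /=; rewrite -(map_rcons succn (pos s) (size s).+1) -IH /= -!map_comp.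
  by congr (_ :: _ :: _); apply: eq_map => y /=; lia.
by congr (_ :: _); apply: eq_map => y /=; lia.
Qed.

Local Open Scope nat_scope.

Fixpoint cnt (be : seq nat) (lo m : nat) : nat :=
  if be is x :: be' then \sum_(lo <= e < m.+1) (x * e <= m) * cnt be' e.+1 (m - x * e)
  else (m == 0).

Lemma sum_trunc lo a b (F : nat -> nat) : a <= b -> (forall e, a <= e -> F e = 0) ->
  \sum_(lo <= e < b) F e = \sum_(lo <= e < a) F e.
Proof.
move=> Hab HF; case: (leqP lo a) => Hlo.
  rewrite (big_cat_nat Hlo Hab) /=.
  rewrite [X in _ + X]big1_seq ?addn0 // => e.
  by rewrite mem_index_iota => /andP[_ /andP[H1 _]]; apply: HF.
rewrite [RHS]big_geq ?(ltnW Hlo) // big1_seq // => e.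
rewrite mem_index_iota => /andP[_ /andP[He _]]; apply: HF; lia.
Qed.

Lemma cnt_shift be lo m : all (fun x => 0 < x) be ->
  cnt be lo.+1 m = (sumn be <= m) * cnt be lo (m - sumn be).
Proof.
elim: be lo m => [|x be IH] lo m /=; first by rewrite subn0 mul1n.
move=> /andP[Hx Hbe].
rewrite -addn1 big_addn.
have Hmm : m.+1 - 1 = m by lia.
rewrite Hmm.
case: (leqP (x + sumn be) m) => HT; last first.
  rewrite mul0n big1_seq // => e _.
  rewrite IH //.
  have : x <= x * (e + 1) by rewrite mulnDr muln1; lia.
  case: (leqP (x * (e + 1)) m) => H1 H2; last by rewrite mul0n.
  case: (leqP (sumn be) (m - x * (e + 1))) => H3; last by rewrite mul0n muln0.
  lia.
rewrite mul1n (@sum_trunc lo (m - (x + sumn be)).+1 m); first last.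
- move=> e He; rewrite IH //.
  have : x * e >= e by rewrite leq_pmull.
  rewrite mulnDr muln1 => H.
  case: (leqP (x * e + x) m) => H1; last by rewrite mul0n.
  case: (leqP (sumn be) (m - (x * e + x))) => H3; last by rewrite mul0n muln0.
  lia.
- lia.
apply: eq_big_nat => e He; rewrite IH // mulnDr muln1.
case: (leqP (x * e + x) m) => H1; case: (leqP (sumn be) (m - (x * e + x))) => H2;
  case: (leqP (x * e) (m - (x + sumn be))) => H3; rewrite ?mul0n ?muln0 ?mul1n //; try lia.
congr (cnt _ _ _); lia.
Qed.

Lemma cnt_rec x be j : 0 < x -> all (fun x => 0 < x) be ->
  cnt (x :: be) 0 j = (x + sumn be <= j) * cnt (x :: be) 0 (j - (x + sumn be))
                      + (sumn be <= j) * cnt be 0 (j - sumn be).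
Proof.
move=> Hx Hbe.
have := @cnt_shift (x :: be) 0 j; rewrite /= Hx Hbe => /(_ isT) <-.
rewrite big_ltn // muln0 subn0 leq0n mul1n cnt_shift // addnC //.
Qed.

Definition ws (be s : seq nat) := \sum_(j < size be) nth 0 be j * nth 0 s j.

Lemma ws_cons x be h s : ws (x :: be) (h :: s) = x * h + ws be s.
Proof. by rewrite /ws /= big_ord_recl. Qed.

Lemma cnt_tuple be lo m M : all (fun x => 0 < x) be -> m < M ->
  \sum_(t : (size be).-tuple 'I_M)
     nat_of_bool (all (leq lo) (map val t) && sorted ltn (map val t) && (ws be (map val t) == m))
  = cnt be lo m.
Proof.
elim: be lo m => [|x be IH] lo m /=.
  move=> _ _; rewrite (big_pred1 [tuple]) /=; last first.
    by move=> t; apply/esym/eqP; rewrite [t]tuple0.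
  by rewrite /ws big_ord0 eq_sym.
move=> /andP[Hx Hbe] HmM.
rewrite sum_tuple_cons.
transitivity (\sum_(h < M) (lo <= h) * ((x * h <= m) * cnt be h.+1 (m - x * h))).
  apply: eq_bigr => h _.
  rewrite -IH //; last by lia.
  rewrite big_distrr /= big_distrr /=; apply: eq_bigr => t _.
  rewrite ws_cons path_sortedE; last exact: ltn_trans.
  case: (leqP lo h) => Hlo /=; last by rewrite mul0n.
  case: (leqP (x * h) m) => Hxh /=.
    have -> : (x * h + ws be [seq val i | i <- t] == m) = (ws be [seq val i | i <- t] == m - x * h).
      apply/eqP/eqP; lia.
    case: (boolP (all (fun y => h < y) [seq val i | i <- t])) => Ha /=.
      have -> : all (leq lo) [seq val i | i <- t].
        by apply: sub_all Ha => y /=; lia.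
      by rewrite !mul1n.
    by rewrite andbF /= !muln0.
  have -> : (x * h + ws be [seq val i | i <- t] == m) = false by apply/eqP; lia.
  by rewrite andbF mul0n muln0.
rewrite -(@sum_trunc lo m.+1 M) //; last first.
  move=> e He; have : e <= x * e by rewrite leq_pmull.
  by case: (leqP (x * e) m) => H1 H2 //; lia.
rewrite big_geq_mkord [RHS]big_mkcond /=; apply: eq_bigr => i _.
by case: leqP => _; rewrite ?mul1n ?mul0n.
Qed.

Lemma pscoef_cnt be m : all (fun x => 0 < x) be -> pscoef be m = cnt be 0 m.
Proof.
move=> Hbe; rewrite -(@cnt_tuple be 0 m m.+1) // /pscoef -sum1_card.
rewrite big_mkcond /=; apply: eq_bigr => t _.
rewrite inE.
have -> : all (leq 0) [seq val i | i <- t] by apply/allP => y _; exact: leq0n.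
have -> : (\sum_(j < size be) nth 0 be j * tnth t j) = ws be (map val t).
  apply: eq_bigr => j _; congr (_ * _).
  by rewrite (nth_map (tnth t j)) ?size_tuple // -tnth_nth.
by case: ifP.
Qed.

Local Open Scope ring_scope.

Lemma pmul_trunc (A : {poly int}) (s : nat -> int) N j : (j <= N)%N ->
  (A * \poly_(i < N.+1) s i)`_j = pmul A s j.
Proof.
move=> HjN; rewrite coefM /pmul; apply: eq_bigr => i _.
rewrite coef_poly ifT //; have := ltn_ord i; lia.
Qed.

Lemma coefM_agree (Q A B : {poly int}) N :
  (forall j, (j <= N)%N -> A`_j = B`_j) -> forall j, (j <= N)%N -> (Q * A)`_j = (Q * B)`_j.
Proof.
move=> H j Hj; rewrite !coefM; apply: eq_bigr => i _; rewrite H //.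
have := ltn_ord i; lia.
Qed.

Definition PT (be : seq nat) : {poly int} := \prod_(t <- tails be) (1 - 'X^t).
Definition cc (be : seq nat) : nat := sumn (behead (tails be)).

Lemma sumn_tails be : sumn (tails be) = (sumn be + cc be)%N.
Proof. by case: be => [|x be] //=. Qed.

Lemma core be : all (fun x => 0 < x)%N be -> forall N j, (j <= N)%N ->
  (PT be * \poly_(i < N.+1) (cnt be 0 i)%:R)`_j = ('X^(cc be) : {poly int})`_j.
Proof.
elim: be => [|x be IH].
  move=> _ N j Hj; rewrite /PT big_nil mul1r coef_poly coefXn ifT //.
move=> /andP[Hx Hbe] N j Hj.
have Hrec : forall j, (j <= N)%N ->
   (((1 : {poly int}) - 'X^(x + sumn be)) * \poly_(i < N.+1) (cnt (x :: be) 0 i)%:R)`_j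
   = ('X^(sumn be) * \poly_(i < N.+1) (cnt be 0 i)%:R)`_j.
  move=> k Hk; rewrite mulrBl mul1r coefB !coefXnM !coef_poly.
  rewrite ifT; last by lia.
  rewrite cnt_rec //.
  case: (ltnP k (x + sumn be)) => H1; case: (ltnP k (sumn be)) => H2.
  all: rewrite ?mul0n ?mul1n ?add0n ?addn0 ?subr0 ?natrD; try (rewrite ifT; [|lia]); try (rewrite ifT; [|lia]).
  all: rewrite ?addrK ?subrr ?(addrAC _ _ (- _)) ?subrr ?add0r //; try lia.
rewrite /PT big_cons -/(PT be) (mulrC (1 - _)) -mulrA.
rewrite (@coefM_agree _ _ _ N Hrec) //.
rewrite mulrCA (@coefM_agree _ _ _ N (IH Hbe N)) //.
by rewrite -exprD /cc /= sumn_tails.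
Qed.

Lemma pw_tuple d (f : bool -> bool -> int) (s u : d.-tuple bool) :
  pw (map f s) u = \prod_(i < d) f (tnth s i) (tnth u i).
Proof.
elim: d s u => [|d IH] s u.
  by rewrite big_ord0 [s]tuple0 [u]tuple0.
case/tupleP: s => x s; case/tupleP: u => y u.
rewrite big_ord_recl /= IH !tnth0; congr (_ * _); apply: eq_bigr => i _.
by rewrite !tnthS.
Qed.

Lemma Theta_pw d (s : d.-tuple bool) :
  Theta d (pw (map lett s)) = \prod_(i < d) (if tnth s i then 'X^(i.+1) else 1 - 'X^(i.+1)).
Proof.
rewrite /Theta.
transitivity (\sum_(u : d.-tuple bool) \prod_(i < d)
   (lett (tnth s i) (tnth u i) *: (if tnth u i then 'X^(i.+1) else (1 : {poly int})))).
  apply: eq_bigr => u _; rewrite pw_tuple scaler_prod; congr (_ *: _).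
  by rewrite -prodrXr big_mkcond.
rewrite (sum_tuple_prod (fun i b => lett (tnth s i) b *: (if b then 'X^(i.+1) else (1 : {poly int})))); apply: eq_bigr => i _.
rewrite big_bool /=.
by case: (tnth s i); rewrite /= ?scale1r ?scale0r ?scaleN1r ?addr0 // addrC.
Qed.

Lemma Pfact n : (1 - 'X) ^+ n * qfact n = \prod_(i < n) ((1 : {poly int}) - 'X^(i.+1)).
Proof.
rewrite -[n in _ ^+ n]card_ord -prodr_const /qfact -big_split /=.
apply: eq_bigr => i _.
by rewrite -opprB mulNr -subrX1 opprB.
Qed.

Lemma prod_pos d (s : d.-tuple bool) (F : nat -> {poly int}) :
  \prod_(t <- pos s) F t = \prod_(i < d | tnth s i) F i.+1.
Proof.
rewrite /pos big_map big_filter size_tuple.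
have -> : iota 0 d = index_iota 0 d by rewrite /index_iota subn0.
rewrite big_mkord; apply: eq_bigl => i; by rewrite (tnth_nth false).
Qed.

Lemma per_s d (s : d.-tuple bool) m :
  (Theta d (pw (map lett s)))`_m =
  pmul ((1 - 'X) ^+ d.+1 * qfact d.+1) (fun k => (pscoef (rev (comp_of s)) k)%:R) m.
Proof.
set be := rev (comp_of s).
have Hpos : all (fun x => 0 < x)%N be by rewrite /be all_rev comp_of_pos.
have Htails : tails be = d.+1 :: rev (pos s).
  by rewrite /be tails_rev psums_comp rev_rcons size_tuple.
set Q := \prod_(i < d | ~~ tnth s i) ((1 : {poly int}) - 'X^(i.+1)).
have HP : \prod_(i < d.+1) ((1 : {poly int}) - 'X^(i.+1)) = Q * PT be.
  rewrite /PT Htails big_cons big_rev prod_pos big_ord_recr /=.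
  rewrite (bigID (fun i => tnth s i)) /= -/Q.
  ring.
have HG : \prod_(i < d) (if tnth s i then 'X^(i.+1) else (1 : {poly int}) - 'X^(i.+1))
          = Q * 'X^(cc be).
  rewrite /cc Htails /= sumn_rev sumnE -prodrXr prod_pos.
  rewrite (bigID (fun i => tnth s i)) /= mulrC; congr (_ * _).
    by apply: eq_bigr => i /negbTE ->.
  by apply: eq_bigr => i ->.
transitivity (pmul ((1 - 'X) ^+ d.+1 * qfact d.+1) (fun k => (cnt be 0 k)%:R) m); last first.
  by apply: eq_bigr => i _; rewrite pscoef_cnt.
rewrite -(@pmul_trunc _ _ m) // Pfact HP -mulrA.
rewrite (@coefM_agree _ _ _ m (@core _ Hpos m)) //.
by rewrite Theta_pw HG.
Qed.

Definition onehot (y : bool) : bool -> int := fun x => (x == y)%:R.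

Lemma pw_onehot (t u : seq bool) : pw (map onehot t) u = (u == t)%:R.
Proof.
elim: t u => [|y t IH] [|x u] //=.
rewrite IH eqseq_cons /onehot.
by case: (x == y); case: (u == t); rewrite /= ?mul1r ?mul0r.
Qed.

Definition Cf d (t s : d.-tuple bool) : int :=
  \prod_(i < d) ((tnth t i ==> tnth s i) : nat)%:R.

Lemma onehot_dec d (t : d.-tuple bool) u :
  pw (map onehot t) u = \sum_(s : d.-tuple bool) Cf t s * pw (map lett s) u.
Proof.
case: (boolP (size u == d)) => Hu; last first.
  rewrite pw_size ?size_map ?size_tuple // big1 // => s _.
  by rewrite pw_size ?mulr0 // size_map size_tuple.
pose tu : d.-tuple bool := Tuple Hu.
have -> : u = tu by [].
rewrite pw_tuple.
rewrite [RHS](eq_bigr (fun s : d.-tuple bool => \prod_(i < d)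
   (((tnth t i ==> tnth s i) : nat)%:R * lett (tnth s i) (tnth tu i)))); last first.
  by move=> s _; rewrite pw_tuple big_split.
rewrite (sum_tuple_prod (fun i b => ((tnth t i ==> b) : nat)%:R * lett b (tnth tu i))).
apply: eq_bigr => i _; rewrite big_bool /onehot.
by case: (tnth t i); case: (tnth tu i); rewrite /= ?mul1r ?mul0r ?add0r ?addr0.
Qed.

Lemma decomp d (w : ncs) : homog d w -> forall u,
  w u = \sum_(p : d.-tuple bool * d.-tuple bool) (w p.1 * Cf p.1 p.2) * pw (map lett p.2) u.
Proof.
move=> Hw u.
rewrite -(pair_bigA _ (fun t s : d.-tuple bool => (w t * Cf t s) * pw (map lett s) u)) /=.
transitivity (\sum_(t : d.-tuple bool) w t * (u == t)%:R).
  case: (boolP (size u == d)) => Hu.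
    pose tu : d.-tuple bool := Tuple Hu.
    rewrite (bigD1 tu) //= eqxx mulr1 big1 ?addr0 // => t Ht.
    have -> : (u == t) = false.
      apply/negbTE; apply: contra Ht => /eqP Ht; apply/eqP/val_inj; by rewrite /= Ht.
    by rewrite mulr0.
  have -> : w u = 0 by apply/eqP; apply: contraR Hu => /Hw ->.
  rewrite big1 // => t _.
  have -> : (u == t) = false.
    by apply: contraNF Hu => /eqP ->; rewrite size_tuple.
  by rewrite mulr0.
apply: eq_bigr => t _.
rewrite -pw_onehot onehot_dec mulr_sumr; apply: eq_bigr => s _.
by rewrite mulrA.
Qed.

Lemma homog0 d f u : homog d f -> size u != d -> f u = 0.
Proof. by move=> Hf Hu; apply/eqP; apply: contraR Hu => /Hf ->. Qed.

Lemma homog_pw L : homog (size L) (pw L).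
Proof. by move=> u Hu; apply/eqP; apply: contraR Hu => /pw_size ->. Qed.

Lemma homog_sum d (I : Type) (r : seq I) (P : pred I) (F : I -> ncs) :
  (forall i, homog d (F i)) -> homog d (fun u => \sum_(i <- r | P i) F i u).
Proof.
move=> HF u Hu; apply/eqP; apply: contraR Hu => Hu; apply/eqP.
by apply: big1 => i _; apply: homog0.
Qed.

Lemma homog_scale d c f : homog d f -> homog d (fun u => c * f u).
Proof. by move=> Hf u Hu; apply/eqP; apply: contraR Hu => /(homog0 Hf) ->; rewrite mulr0. Qed.

Section GammaLin.
Variables (d : nat) (gamma : ncs -> qsym).
Hypothesis hadd : forall f g, homog d f -> homog d g ->
     forall be, gamma (ncadd f g) be = gamma f be + gamma g be.

Lemma homog_zero : homog d (fun _ => 0).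
Proof. by move=> u; rewrite eqxx. Qed.

Lemma gamma0 be : gamma (fun _ => 0) be = 0.
Proof.
have := hadd homog_zero homog_zero be.
have -> : ncadd (fun _ => 0) (fun _ => 0) = (fun _ => 0).
  by apply: functional_extensionality => u; rewrite /ncadd addr0.
move=> H; have : gamma (fun=> 0) be + gamma (fun=> 0) be - gamma (fun=> 0) be =
                 gamma (fun=> 0) be - gamma (fun=> 0) be by rewrite -H.
by rewrite addrK subrr.
Qed.

Lemma gammaN f be : homog d f -> gamma (fun u => - f u) be = - gamma f be.
Proof.
move=> Hf.
have HN : homog d (fun u => - f u).
  by move=> u Hu; apply/eqP; apply: contraR Hu => /(homog0 Hf) ->; rewrite oppr0.
have := hadd Hf HN be.
have -> : ncadd f (fun u => - f u) = (fun _ => 0).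
  by apply: functional_extensionality => u; rewrite /ncadd subrr.
rewrite gamma0 => /eqP; rewrite eq_sym addr_eq0 => /eqP ->.
by rewrite opprK.
Qed.

Lemma gammaZ c f be : homog d f -> gamma (fun u => c * f u) be = c * gamma f be.
Proof.
move=> Hf.
have Hnat : forall k : nat, gamma (fun u => (k : int) * f u) be = (k : int) * gamma f be.
  elim=> [|k IH].
    have -> : (fun u => (0%N : int) * f u) = (fun _ => 0).
      by apply: functional_extensionality => u; rewrite mul0r.
    by rewrite gamma0 mul0r.
  have -> : (fun u => (k.+1 : int) * f u) = ncadd f (fun u => (k : int) * f u).
    by apply: functional_extensionality => u; rewrite /ncadd intS mulrDl mul1r.
  by rewrite hadd // ?IH ?intS ?mulrDl ?mul1r //; apply: homog_scale.
case: c => k; first exact: Hnat.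
have -> : (fun u => Negz k * f u) = (fun u => - ((k.+1 : int) * f u)).
  by apply: functional_extensionality => u; rewrite NegzE mulNr.
by rewrite gammaN ?Hnat ?NegzE ?mulNr //; apply: homog_scale.
Qed.

Lemma gamma_sum (I : Type) (r : seq I) (P : pred I) (F : I -> ncs) be :
  (forall i, homog d (F i)) ->
  gamma (fun u => \sum_(i <- r | P i) F i u) be = \sum_(i <- r | P i) gamma (F i) be.
Proof.
move=> HF; elim: r => [|x r IH].
  have -> : (fun u => \sum_(i <- [::] | P i) F i u) = (fun _ => 0).
    by apply: functional_extensionality => u; rewrite big_nil.
  by rewrite gamma0 big_nil.
rewrite big_cons; case: (boolP (P x)) => Hx.
  have -> : (fun u => \sum_(i <- x :: r | P i) F i u)
            = ncadd (F x) (fun u => \sum_(i <- r | P i) F i u).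
    by apply: functional_extensionality => u; rewrite /ncadd big_cons Hx.
  by rewrite hadd // ?IH //; apply: homog_sum.
have -> : (fun u => \sum_(i <- x :: r | P i) F i u) = (fun u => \sum_(i <- r | P i) F i u).
  by apply: functional_extensionality => u; rewrite big_cons (negbTE Hx).
exact: IH.
Qed.

End GammaLin.

Lemma mem_le_sumn (x : nat) s : x \in s -> (x <= sumn s)%N.
Proof.
elim: s => [|y s IH] //=; rewrite inE => /orP[/eqP -> | /IH]; lia.
Qed.

Lemma size_le_sumn s : all (fun x => 0 < x)%N s -> (size s <= sumn s)%N.
Proof. elim: s => [|y s IH] //= /andP[Hy /IH]; lia. Qed.

Lemma pick_comp n al (F : seq nat -> int) : is_comp n al ->
  \sum_(k < n.+1) \sum_(t : k.-tuple 'I_n.+1 | is_comp n (map val t))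
     (map val t == al)%:R * F (map val t) = F al.
Proof.
move=> Hal; have /andP[Hpos /eqP Hsum] := Hal.
have Hsz : (size al < n.+1)%N by have := size_le_sumn Hpos; lia.
rewrite (bigD1 (Ordinal Hsz)) //= [X in _ + X]big1 ?addr0; last first.
  move=> k Hk; apply: big1 => t _.
  have -> : (map val t == al) = false.
    apply: contraNF Hk => /eqP Ht; apply/eqP/val_inj => /=.
    by rewrite -Ht size_map size_tuple.
  by rewrite mul0r.
pose t0 := map_tuple (@inord n) (in_tuple al).
have Ht0 : map val t0 = al.
  rewrite /= -map_comp map_id_in // => x Hx /=; rewrite inordK //.
  by have := mem_le_sumn Hx; lia.
rewrite (bigD1 t0) /=; last by rewrite Ht0.
rewrite big1 ?addr0 ?Ht0 ?eqxx ?mul1r // => t /andP[_ Ht].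
have -> : (map val t == al) = false.
  apply: contraNF Ht => /eqP Ht; apply/eqP/val_inj.
  by apply: (inj_map val_inj); rewrite Ht Ht0.
by rewrite mul0r.
Qed.

Lemma psstar_lin n (I : finType) (c : I -> int) (al : I -> seq nat) (f : qsym) m :
  (forall i, is_comp n (al i)) ->
  (forall be, f be = \sum_i c i * (be == al i)%:R) ->
  psstar n f m = \sum_i c i * (pscoef (rev (al i)) m)%:R.
Proof.
move=> Hal Hf; rewrite /psstar.
transitivity (\sum_(k < n.+1) \sum_(t : k.-tuple 'I_n.+1 | is_comp n (map val t))
   \sum_i c i * ((map val t == al i)%:R * (pscoef (rev (map val t)) m)%:R)).
  apply: eq_bigr => k _; apply: eq_bigr => t _.
  rewrite Hf mulr_suml; apply: eq_bigr => i _; by rewrite mulrA.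
under eq_bigr do rewrite exchange_big.
rewrite exchange_big; apply: eq_bigr => i _.
under eq_bigr do under eq_bigr do rewrite mulrCA.
exact: (pick_comp (fun s => c i * (pscoef (rev s) m)%:R) (Hal i)).
Qed.

Lemma Theta_lin d (I : finType) (c : I -> int) (F : I -> ncs) :
  Theta d (fun u => \sum_i c i * F i u) = \sum_i c i *: Theta d (F i).
Proof.
rewrite /Theta; under eq_bigr do rewrite scaler_suml.
rewrite exchange_big; apply: eq_bigr => i _.
by rewrite scaler_sumr; apply: eq_bigr => u _; rewrite scalerA.
Qed.

Lemma Theta_ext d f g : f =1 g -> Theta d f = Theta d g.
Proof. by move=> H; apply: eq_bigr => u _; rewrite H. Qed.

Lemma vset_pw m (S : {set 'I_m}) :
  vset S =1 pw (map (fun i => if i \in S then lb else lamb) (enum 'I_m)).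
Proof.
rewrite /vset; elim: (enum 'I_m) => [|i r IH] u /=; first exact: ncone_pw.
rewrite (ncmul_ext (g' := pw (map (fun i => if i \in S then lb else lamb) r))
          (f' := pw [:: if i \in S then lb else lamb]) _ IH) ?ncmul_pw //.
by case: (i \in S); [exact: ncb_pw | exact: ncamb_pw].
Qed.

Lemma homog_abindex disp (T : finPOrderType disp) (z o : T) rho m :
  homog m (abindex z o rho m).
Proof.
move=> u Hu; apply/eqP; apply: contraR Hu => Hu; apply/eqP.
rewrite /abindex big1 // => S _; rewrite vset_pw pw_size ?mulr0 //.
by rewrite size_map size_enum_ord.
Qed.

Unset Implicit Arguments.
Theorem mainTheorem6 (n : nat) (gamma : ncs -> qsym) :
  (0 < n)%N ->
  (forall f g, homog n.-1 f -> homog n.-1 g ->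
     forall be, gamma (ncadd f g) be = gamma f be + gamma g be) ->
  (forall al, is_comp n al -> forall be, gamma (vcomp al) be = Mbasis al be) ->
  (forall w : ncs, homog n.-1 w ->
     forall m, (Theta n.-1 w)`_m
               = pmul ((1 - 'X) ^+ n * qfact n) (psstar n (gamma w)) m)
  /\
  (forall (disp : Order.disp_t) (T : finPOrderType disp) (z o : T) (rho : T -> nat),
     graded_rank z o rho n ->
     forall m, (Theta n.-1 (abindex z o rho n.-1))`_m
               = pmul ((1 - 'X) ^+ n * qfact n)
                      (psstar n (gamma (abindex z o rho n.-1))) m).
Proof.
case: n => [//|d] _ /= hadd hcomp.
have P1 : forall w : ncs, homog d w ->
     forall m, (Theta d w)`_m
               = pmul ((1 - 'X) ^+ d.+1 * qfact d.+1) (psstar d.+1 (gamma w)) m.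
  move=> w Hw m.
  pose c (p : d.-tuple bool * d.-tuple bool) := w p.1 * Cf p.1 p.2.
  pose F (p : d.-tuple bool * d.-tuple bool) := pw (map lett p.2).
  have Ew : w = (fun u => \sum_p c p * F p u).
    by apply: functional_extensionality => u; rewrite (decomp Hw).
  have HF : forall p, homog d (F p).
    by move=> p; have := @homog_pw (map lett p.2); rewrite size_map size_tuple.
  have Hcomp : forall p : d.-tuple bool * d.-tuple bool, is_comp d.+1 (comp_of p.2).
    by move=> p; have := @is_comp_of p.2; rewrite size_tuple.
  have Hg : forall be, gamma w be = \sum_p c p * (be == comp_of p.2)%:R.
    move=> be; rewrite Ew (gamma_sum hadd) => [|p]; last exact: homog_scale.
    apply: eq_bigr => p _; rewrite (gammaZ hadd) //.
    have -> : F p = vcomp (comp_of p.2).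
      apply: functional_extensionality => u.
      by rewrite vcomp_pw vword_comp.
    by rewrite hcomp.
  transitivity (\sum_(i < m.+1) ((1 - 'X) ^+ d.+1 * qfact d.+1)`_i *
     \sum_p c p * (pscoef (rev (comp_of p.2)) (m - i))%:R); last first.
    by apply: eq_bigr => i _; rewrite (psstar_lin _ Hcomp Hg).
  rewrite {1}Ew Theta_lin coef_sum /pmul.
  under eq_bigr do rewrite coefZ per_s /pmul.
  under eq_bigr do rewrite mulr_sumr.
  rewrite exchange_big; apply: eq_bigr => i _.
  by rewrite mulr_sumr; apply: eq_bigr => p _; rewrite mulrCA.
split=> //.
move=> disp T z o rho _ m; apply: P1; exact: homog_abindex.
Qed.
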